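(* For every directed forest $\mathcal{T}=(V,\mathsf{p})$ there exists a greatest element (with respect to the relation ''thinner than'') in the set of all leafless directed forests with vertex set $V$ that are thinner than $\mathcal{T}$.
   Context: A directed forest is a pair $\mathcal{T}=(V,\mathsf{p})$ where $V$ is a nonempty set and $\mathsf{p}\colon V\to V$ satisfies: if $n\in\mathbb{N}$, $v\in V$ and $\mathsf{p}^n(v)=v$, then $\mathsf{p}(v)=v$. A leaf is an element of $V\setminus\mathsf{p}(V)$; the forest is leafless if $\mathsf{p}(V)=V$. For directed forests $\mathcal{T}_1=(V,\mathsf{p}_1)$, $\mathcal{T}_2=(V,\mathsf{p}_2)$, $\mathcal{T}_1$ is thinner than $\mathcal{T}_2$ if $\mathsf{p}_1(v)\in\{v,\mathsf{p}_2(v)\}$ for every $v\in V$; this is a partial order. *)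

(* Defs.v *)
From Stdlib Require Import PeanoNat.

Definition directed_forest {V : Type} (p : V -> V) : Prop :=
  forall (n : nat) (v : V), 1 <= n -> Nat.iter n p v = v -> p v = v.

Definition leafless {V : Type} (p : V -> V) : Prop :=
  forall v : V, exists u : V, p u = v.

Definition thinner {V : Type} (p1 p2 : V -> V) : Prop :=
  forall v : V, p1 v = v \/ p1 v = p2 v.

(* Main.v *)
Require Import Defs.
From Stdlib Require Import ClassicalEpsilon.

Section S.
Variables (V : Type) (p : V -> V).

Definition Kp (v : V) : Prop :=
  exists S : V -> Prop, S v /\ forall w, S w -> exists u, S u /\ p u = w /\ u <> w.

Lemma Kp_p v : Kp v -> Kp (p v).
Proof.
  intros [S [Sv HS]].
  destruct (excluded_middle_informative (p v = v)) as [e|ne].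
  - rewrite e. exists S; auto.
  - exists (fun w => S w \/ w = p v). split; [right; reflexivity|].
    intros w [Sw|ew]; [|subst w].
    + destruct (HS w Sw) as [u [Su [pu uw]]]. exists u; auto.
    + exists v. split; [left; exact Sv|]. split; [reflexivity|]. intro h; apply ne; now rewrite <- h.
Qed.

Definition qf (v : V) : V := if excluded_middle_informative (Kp v) then p v else v.

Lemma iter_q v : Kp v -> forall n, Kp (Nat.iter n p v) /\ Nat.iter n qf v = Nat.iter n p v.
Proof.
  intros Kv n; induction n as [|n [IH1 IH2]]; simpl; [auto|].
  rewrite IH2. unfold qf at 1.
  destruct (excluded_middle_informative (Kp (Nat.iter n p v))) as [k|k]; [|contradiction].
  split; [apply Kp_p; exact k|reflexivity].
Qed.
End S.

Theorem theorem4p3 (V : Type) (hV : inhabited V) (p : V -> V) :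
  directed_forest p ->
  exists q : V -> V,
    (directed_forest q /\ leafless q /\ thinner q p) /\
    (forall r : V -> V,
        directed_forest r -> leafless r -> thinner r p -> thinner r q).
Proof.
  intro Hp. exists (qf V p). split; [split; [|split]|].
  - intros n v hn hit. unfold qf at 1.
    destruct (excluded_middle_informative (Kp V p v)) as [k|k]; [|reflexivity].
    destruct (iter_q V p v k n) as [_ e]. rewrite e in hit.
    apply (Hp n v hn) in hit. rewrite hit. reflexivity.
  - intro v. destruct (excluded_middle_informative (Kp V p v)) as [k|k].
    + destruct k as [S [Sv HS]]. destruct (HS v Sv) as [u [Su [pu uv]]].
      exists u. unfold qf.
      destruct (excluded_middle_informative (Kp V p u)) as [_|nk]; [exact pu|].
      exfalso; apply nk. exists S; auto.
    + exists v. unfold qf. destruct (excluded_middle_informative (Kp V p v)); [contradiction|reflexivity].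
  - intro v. unfold qf. destruct (excluded_middle_informative (Kp V p v)); auto.
  - intros r _ Hl Ht v.
    destruct (Ht v) as [e|e]; [left; exact e|].
    destruct (excluded_middle_informative (r v = v)) as [e'|ne]; [left; exact e'|].
    right. unfold qf. destruct (excluded_middle_informative (Kp V p v)) as [_|nk]; [exact e|].
    exfalso; apply nk. exists (fun w => r w <> w). split; [exact ne|].
    intros w hw. destruct (Hl w) as [u ru].
    assert (uw : u <> w) by (intro h; rewrite h in ru; exact (hw ru)).
    exists u. split; [rewrite ru; intro h; apply uw; symmetry; exact h|].
    split; [|exact uw].
    destruct (Ht u) as [h|h]; [exfalso; apply uw; rewrite <- ru; rewrite h; reflexivity|].
    rewrite <- h; exact ru.
Qed.
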